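(* Under the standing setting and assumptions (A1)–(A3) described in the context, assume $\mathcal A$ is convex and $\mathrm{int}(\mathcal A^\infty)\cap\mathcal M\neq\emptyset$. Then for every $\varepsilon>0$ the map $\mathcal R_\varepsilon$ is lower semicontinuous at every point of $\mathcal X$.
   Context: Let $\mathcal X$ be a Hausdorff, first countable, locally convex topological vector space over $\mathbb R$, partially ordered by a partial order $\geq$ with positive cone $\mathcal X_+=\{X\in\mathcal X: X\geq 0\}$. Let $\mathcal M\subset\mathcal X$ be a vector subspace with $1<\dim\mathcal M<\infty$, carrying the relative topology, and let $\pi:\mathcal M\to\mathbb R$ be linear. Standing assumptions: (A1) there is $U\in\mathcal M\cap\mathcal X_+$ with $\pi(U)=1$; (A2) $\mathcal A\subsetneq\mathcal X$ is closed, contains $0$, and satisfies $\mathcal A+\mathcal X_+\subset\mathcal A$; (A3) the map $\rho(X)=\inf\{\pi(Z): Z\in\mathcal M,\ X+Z\in\mathcal A\}$ is finitely valued and continuous on $\mathcal X$. For $\varepsilon>0$, $\mathcal R_\varepsilon(X)=\{Z\in\mathcal M: X+Z\in\mathcal A,\ \pi(Z)<\rho(X)+\varepsilon\}$. The asymptotic cone is $\mathcal A^\infty=\bigcap_{\delta>0}\mathrm{cl}\{\lambda X:\lambda\in[0,\delta],X\in\mathcal A\}$; $\mathrm{int}$ denotes interior in $\mathcal X$. A set-valued map $\mathcal S:\mathcal X\rightrightarrows\mathcal M$ is lower semicontinuous at $X$ if for every open $\mathcal U\subset\mathcal M$ with $\mathcal S(X)\cap\mathcal U\neq\emptyset$ there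 is an open neighborhood $\mathcal U_X$ of $X$ with $\mathcal S(Y)\cap\mathcal U\neq\emptyset$ for all $Y\in\mathcal U_X$. *)

(* Defs.v *)
From HB Require Import structures.
From mathcomp Require Import all_boot all_order all_algebra.
From mathcomp Require Import all_classical all_reals all_analysis.
Set Implicit Arguments. Unset Strict Implicit. Unset Printing Implicit Defensive.
Import Order.TTheory GRing.Theory Num.Theory numFieldTopology.Exports numFieldNormedType.Exports.
Local Open Scope classical_set_scope.
Local Open Scope ring_scope.

Section Defs.
Context {R : realType} {E : tvsType R}.

Definition first_countable : Prop :=
  forall x : E, exists B : nat -> set E,
    (forall n, nbhs x (B n)) /\ (forall U, nbhs x U -> exists n, B n `<=` U).

Definition vector_partial_order (ge : E -> E -> Prop) : Prop :=
  [/\ (forall x, ge x x),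
      (forall x y, ge x y -> ge y x -> x = y),
      (forall x y z, ge x y -> ge y z -> ge x z),
      (forall x y z, ge x y -> ge (x + z) (y + z)) &
      (forall (a : R) x y, 0 <= a -> ge x y -> ge (a *: x) (a *: y))].

Definition positive_cone (ge : E -> E -> Prop) : set E := [set x | ge x 0].

Definition is_subspace (M : set E) : Prop :=
  [/\ M 0, (forall x y, M x -> M y -> M (x + y)) &
      (forall (a : R) x, M x -> M (a *: x))].

Definition has_dim (M : set E) (n : nat) : Prop :=
  exists e : 'I_n -> E,
    [/\ (forall i, M (e i)),
        (forall c : 'I_n -> R, \sum_(i < n) c i *: e i = 0 -> forall i, c i = 0) &
        (forall x, M x -> exists c : 'I_n -> R, x = \sum_(i < n) c i *: e i)].

Definition linear_on (M : set E) (pi : E -> R) : Prop :=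
  (forall x y, M x -> M y -> pi (x + y) = pi x + pi y) /\
  (forall (a : R) x, M x -> pi (a *: x) = a * pi x).

Definition rho_set (M A : set E) (pi : E -> R) (X : E) : set R :=
  [set pi Z | Z in [set Z | M Z /\ A (X + Z)]].

Definition rho (M A : set E) (pi : E -> R) (X : E) : R := inf (rho_set M A pi X).

Definition Reps (M A : set E) (pi : E -> R) (eps : R) (X : E) : set E :=
  [set Z | [/\ M Z, A (X + Z) & pi Z < rho M A pi X + eps]].

Definition asymptotic_cone (A : set E) : set E :=
  \bigcap_(d in [set d : R | 0 < d])
    closure [set y | exists l a, [/\ 0 <= l <= d, A a & y = l *: a]].

Definition rel_open (M U : set E) : Prop :=
  exists O : set E, open O /\ U = O `&` M.

Definition lsc_at (M : set E) (S : E -> set E) (X : E) : Prop :=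
  forall U : set E, rel_open M U -> U `<=` M -> S X `&` U !=set0 ->
    exists V : set E, [/\ open V, V X &
      forall Y, V Y -> S Y `&` U !=set0].

End Defs.

(* Main.v *)
Require Import Defs.
From HB Require Import structures.
From mathcomp Require Import all_boot all_order all_algebra.
From mathcomp Require Import all_classical all_reals all_analysis.
From mathcomp Require Import lra.
Import Order.TTheory GRing.Theory Num.Theory numFieldTopology.Exports numFieldNormedType.Exports.
Local Open Scope classical_set_scope.
Local Open Scope ring_scope.

Section H.
Context {R : realType} {E : tvsType R}.

Lemma tvs_cvgD T (F : set_system T) (FF : Filter F) (f g : T -> E) a b :
  f @ F --> a -> g @ F --> b -> (fun x => f x + g x) @ F --> a + b.
Proof.
move=> fa gb.
exact: (@continuous_cvg _ _ _ F FF (fun x => (f x, g x)) (fun z : E * E => z.1 + z.2) (a, b) (@add_continuous _ (a,b)) (cvg_pair fa gb)).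
Qed.

Lemma tvs_cvgZ T (F : set_system T) (FF : Filter F) (s : T -> R) (f : T -> E) (k : R) (a : E) :
  s @ F --> k -> f @ F --> a -> (fun x => s x *: f x) @ F --> k *: a.
Proof.
move=> sk fa.
exact: (@continuous_cvg _ _ _ F FF (fun x => (s x : R^o, f x)) (fun z : R^o * E => z.1 *: z.2) (k, a) (@scale_continuous _ _ (k,a)) (cvg_pair sk fa)).
Qed.
Lemma rec_lemma (A : set E) : closed A -> convex_set (A : set (convex_lmodType E)) ->
  forall a w (t : R), A a -> asymptotic_cone A w -> 0 < t -> A (a + t *: w).
Proof.
move=> cA cvA a w t Aa Aw t0.
rewrite (closure_id A).1 //.
move=> B Bn.
pose h := fun z : R * E => a + (- z.1) *: a + t *: z.2.
have hc : h @ nbhs ((0:R), w) --> a + t *: w.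
  have -> : a + t *: w = a + (- 0) *: a + t *: w by rewrite oppr0 scale0r addr0.
  apply: tvs_cvgD; [apply: tvs_cvgD| apply: tvs_cvgZ].
  - exact: cvg_cst.
  - apply: tvs_cvgZ; last exact: cvg_cst.
    apply: cvgN; exact: cvg_fst.
  - exact: cvg_cst.
  - exact: cvg_snd.
have := hc B Bn.
move=> [[P1 P2]] /= [P1n P2n] PB.
have [e /= e0 He] := (nbhs_ballP _ _).1 P1n.
pose d := Num.min (e / 2 : R) 1 / t.
have d0 : 0 < d by rewrite divr_gt0 // lt_min ltr01 divr_gt0 // andbT.
have := Aw d d0 P2 P2n.
move=> [y [[l [a' [/andP [l0 ld] Aa' ->]]] P2y]].
have tl0 : 0 <= t * l by rewrite mulr_ge0 // ltW.
have tld : t * l <= Num.min (e / 2 : R) 1.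
  by rewrite -(@ler_pM2l _ (t^-1)) ?invr_gt0 // mulrA mulVf ?gt_eqF // mul1r mulrC.
have tl1 : t * l <= 1.
  apply: (le_trans tld). have m1 : Num.min (e / 2 : R) 1 <= (1:R) by rewrite ge_min lexx orbT. exact: m1.
have tle : t * l < e.
  apply: (le_lt_trans tld); rewrite gt_min; apply/orP; left.
  by rewrite ltr_pdivrMr // ltr_pMr // ltr1n.
have hB : B (h (t * l, l *: a')).
  apply: PB; split => //=.
  apply: He; rewrite -ball_normE /ball_ /= sub0r normrN ger0_norm //.
exists (h (t * l, l *: a')); split => //.
have := cvA a' a (Itv01 tl0 tl1) (mem_set Aa') (mem_set Aa).
move/set_mem.
congr A.
rewrite /h /= /conv /= /unstable.onem scalerA scalerBl scale1r scaleNr.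
by rewrite addrC.

Qed.
Lemma cont_g (W X : E) (c : R) : continuous (fun Y : E => W + c *: (Y + - X)).
Proof.
move=> Y.
apply: tvs_cvgD; first exact: cvg_cst.
apply: tvs_cvgZ; first exact: cvg_cst.
apply: tvs_cvgD; [exact: cvg_id | exact: cvg_cst].
Qed.
End H.

Theorem mainTheorem20 (R : realType) (E : tvsType R)
    (ge : E -> E -> Prop) (M : set E) (pi : E -> R) (A : set E) :
  hausdorff_space E ->
  first_countable (E := E) ->
  vector_partial_order ge ->
  is_subspace M ->
  (exists n : nat, (1 < n)%N /\ has_dim M n) ->
  linear_on M pi ->
  (* (A1) *)
  (exists U : E, [/\ M U, positive_cone ge U & pi U = 1]) ->
  (* (A2) *)
  closed A -> A 0 -> A <> setT ->
  (forall a p, A a -> positive_cone ge p -> A (a + p)) ->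
  (* (A3) *)
  (forall X, rho_set M A pi X !=set0 /\ has_lbound (rho_set M A pi X)) ->
  continuous (rho M A pi) ->
  (* additional hypotheses *)
  convex_set (A : set (convex_lmodType E)) ->
  interior (asymptotic_cone A) `&` M !=set0 ->
  forall eps : R, 0 < eps -> forall X : E, lsc_at M (Reps M A pi eps) X.
Proof.
move=> _ _ _ [sM0 sMD sMZ] _ [piD piZ] _ cA _ _ _ _ rhoc cvA [W [WI WM]] eps eps0 X.
move=> U [Op [Oo ->]] _ [Z0 [[Z0M XZ0A Z0lt] [OZ0 _]]].
set r := rho M A pi.
pose d0 := (r X + eps - pi Z0) / 2.
have d00 : 0 < d0 by rewrite divr_gt0 // subr_gt0.
have OZ0n : nbhs Z0 Op by move: Oo; rewrite openE => /(_ _ OZ0).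
have c1 : (fun s : R => Z0 + s *: W) @ nbhs (0:R) --> Z0.
  have {2}-> : Z0 = Z0 + 0 *: W by rewrite scale0r addr0.
  apply: tvs_cvgD; first exact: cvg_cst.
  apply: tvs_cvgZ; [exact: cvg_id | exact: cvg_cst].
have n1 : nbhs (0:R) [set s | Op (Z0 + s *: W)] := c1 _ OZ0n.
have n2 : nbhs (0:R) (ball (0:R) (d0 / (`|pi W| + 1))).
  apply: nbhsx_ballx; by rewrite divr_gt0 // ltr_wpDl.
have [e /= e0 He] := (nbhs_ballP _ _).1 (filterI n1 n2).
pose t : R := e / 2.
have t0 : 0 < t by rewrite divr_gt0.
have tb : ball (0:R) e t.
  rewrite -ball_normE /ball_ /= sub0r normrN gtr0_norm //.
  by rewrite ltr_pdivrMr // ltr_pMr // ltr1n.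
have [tO tpi] := He t tb.
move: tpi; rewrite -ball_normE /ball_ /= sub0r normrN gtr0_norm // => tpi.
have tpiW : t * pi W < d0.
  apply: (le_lt_trans (ler_norm _)); rewrite normrM gtr0_norm //.
  apply: (le_lt_trans (_ : _ <= t * (`|pi W| + 1))).
    by rewrite ler_pM2l // lerDl.
  by rewrite -ltr_pdivlMr // ltr_wpDl.
pose g := fun Y : E => W + t^-1 *: (Y + - X).
exists (g @^-1` interior (asymptotic_cone A) `&` [set Y | r Y > r X - d0]).
split.
- apply: openI.
  + apply: open_comp; last exact: open_interior.
    by move=> Y _; apply: cont_g.
  + apply: (@open_comp _ _ r [set x : R | x > r X - d0]); last exact: open_gt.
    by move=> Y _; apply: rhoc.
- split; last by rewrite /= ltrBlDr ltrDl.
  by rewrite /g /= subrr scaler0 addr0.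
move=> Y [gY rY].
have ZM : M (Z0 + t *: W) by apply: sMD => //; apply: sMZ.
exists (Z0 + t *: W); split; last by split.
split => //.
- have -> : Y + (Z0 + t *: W) = (X + Z0) + t *: g Y.
    rewrite /g scalerDr scalerA mulfV ?gt_eqF // scale1r.
    rewrite [RHS]addrCA [X + Z0 + _]addrC (addrA (Y - X)) subrK.
    by rewrite [LHS]addrC [Z0 + t *: W]addrC -addrA (addrC Z0).
  apply: rec_lemma => //.
  exact: interior_subset.
- rewrite piD // ?piZ //; last by apply: sMZ.
  move: rY tpiW; rewrite /= /d0 /r => rY tpiW.
  set p := t * pi W in tpiW *.
  lra.
Qed.
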